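(* Let $r\ge 2$ be a constant, and let $k\ge 2r$ and $n\ge k$. Let $T(k)$ be the optimization time of the (1+1) EA with bit flip probability $1/n$ on $\mathrm{Fork}_{k,r}$ (bit strings of length $k$), where $\mathrm{Fork}_{k,r}(x)=k+1$ if $x=0^r1^{k-r}$, $k+2$ if $x=1^{k-r}0^r$, and $|x|_1$ otherwise. Then $E(T(k))\in\Theta(n^{2r})$.
   Context: The (1+1) EA with bit flip probability $1/n$ on strings of length $k$: start with $x$ uniform in $\{0,1\}^k$; each iteration create $y$ by flipping each bit of $x$ independently with probability $1/n$, set $x\gets y$ if $f(y)\ge f(x)$. Optimization time = number of iterations until the optimum $1^{k-r}0^r$ is the current solution. Asymptotics are with respect to $n\to\infty$. *)

(* Defs.v *)
From mathcomp Require Import all_boot all_order all_algebra.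
From mathcomp Require Import all_classical all_reals all_analysis.
Set Implicit Arguments. Unset Strict Implicit. Unset Printing Implicit Defensive.
Import Order.TTheory GRing.Theory Num.Theory.
Local Open Scope ring_scope.

Definition bits (k : nat) := {ffun 'I_k -> bool}.

Definition ones k (x : bits k) : nat := #|[set i | x i]|.

Definition forkA k r : bits k := [ffun i : 'I_k => (r <= i)%N].
Definition forkB k r : bits k := [ffun i : 'I_k => (i < k - r)%N].

Definition Fork k r (x : bits k) : nat :=
  if x == forkB k r then (k + 2)%N
  else if x == forkA k r then (k + 1)%N
  else ones x.

Section EA.
Variable R : realType.
Variables (n k r : nat).

Definition mutp (x y : bits k) : R :=
  \prod_(i < k) (if x i == y i then 1 - n%:R^-1 else n%:R^-1).

Definition trans (x y : bits k) : R :=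
  \sum_(z : bits k)
     mutp x z * (if (if (Fork r x <= Fork r z)%N then z else x) == y then 1 else 0).

(* surv t y = Pr[ the optimum has not been hit at times 0..t and x_t = y ] *)
Fixpoint surv (t : nat) (y : bits k) : R :=
  if y == forkB k r then 0 else
  match t with
  | 0 => (2 ^+ k)^-1
  | t'.+1 => \sum_(x : bits k) surv t' x * trans x y
  end.

Definition tailT (t : nat) : R := \sum_(y : bits k) surv t y.

(* E[T] = sum_{t >= 0} Pr[T > t]  (in the extended reals) *)
Definition ET : \bar R := (\sum_(0 <= t <oo) (tailT t)%:E)%E.
End EA.

(* Main.v *)
Require Import Defs.
From mathcomp Require Import all_boot all_order all_algebra.
From mathcomp Require Import all_classical all_reals all_analysis.
From mathcomp Require Import zify ring lra.
Import Order.TTheory GRing.Theory Num.Theory.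
Local Open Scope ring_scope.

Definition Fnext {k} r (x z : bits k) : bits k :=
  if (Fork r x <= Fork r z)%N then z else x.

Lemma trans_sum (R : realType) n k r (x : bits k) (h : bits k -> R) :
  \sum_y trans R n r x y * h y = \sum_z mutp R n x z * h (Fnext r x z).
Proof.
rewrite /trans.
under eq_bigr do rewrite big_distrl /=.
rewrite exchange_big /=; apply: eq_bigr => z _.
rewrite (bigD1 (Fnext r x z)) //= /Fnext eqxx mulr1 big1 ?addr0 //.
by move=> y /negbTE; rewrite eq_sym => ->; rewrite mulr0 mul0r.
Qed.

Lemma mutp_sum1 (R : realType) n k (x : bits k) :
  \sum_z mutp R n x z = 1.
Proof.
rewrite /mutp.
have := (@bigA_distr_bigA R 0 1 *%R +%R 'I_k bool
   (fun i b => if x i == b then 1 - n%:R^-1 else n%:R^-1)).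
move=> <-; rewrite big1 // => i _.
rewrite big_bool /=; case: (x i) => /=; rewrite ?eqxx /=; ring.
Qed.

Lemma mutp_ge0 (R : realType) n k (x z : bits k) : (1 <= n)%N ->
  0 <= mutp R n x z.
Proof.
move=> n1; rewrite /mutp; apply: prodr_ge0 => i _.
have q0 : 0 <= n%:R^-1 :> R by rewrite invr_ge0.
have q1 : n%:R^-1 <= 1 :> R by rewrite invf_le1 // ?ler1n // ltr0n.
by case: ifP => _ //; rewrite subr_ge0.
Qed.

Lemma trans_ge0 (R : realType) n k r (x y : bits k) : (1 <= n)%N ->
  0 <= trans R n r x y.
Proof.
move=> n1; apply: sumr_ge0 => z _; apply: mulr_ge0; first exact: mutp_ge0.
by case: ifP.
Qed.

Lemma trans_row (R : realType) n k r (x : bits k) :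
  \sum_y trans R n r x y = 1.
Proof.
have := trans_sum R n k r x (fun _ => 1).
under eq_bigr do rewrite mulr1. move=> ->.
under eq_bigr do rewrite mulr1. exact: mutp_sum1.
Qed.

Lemma surv_B (R : realType) n k r t : surv R n r t (forkB k r) = 0.
Proof. by case: t => [|t] /=; rewrite eqxx. Qed.

Lemma surv_ge0 (R : realType) n k r t (y : bits k) : (1 <= n)%N ->
  0 <= surv R n r t y.
Proof.
move=> n1; elim: t y => [|t IH] y /=; case: ifP => // _.
by apply: sumr_ge0 => x _; apply: mulr_ge0 => //; exact: trans_ge0.
Qed.

Lemma ones_le {k} (x : bits k) : (ones x <= k)%N.
Proof. by rewrite /ones; apply: leq_trans (max_card _) _; rewrite card_ord. Qed.

Lemma AneB {k r} : (0 < r)%N -> (2 * r <= k)%N -> forkA k r != forkB k r.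
Proof.
move=> r0 rk; have k0 : (0 < k)%N by lia.
apply/eqP => /ffunP/(_ (Ordinal k0)); rewrite !ffunE /=.
have -> : (r <= 0)%N = false by lia.
have -> : (0 < k - r)%N = true by lia.
done.
Qed.

Lemma Fork_B k r : Fork r (forkB k r) = (k + 2)%N.
Proof. by rewrite /Fork eqxx. Qed.

Lemma Fork_A {k r} : (0 < r)%N -> (2 * r <= k)%N -> Fork r (forkA k r) = (k + 1)%N.
Proof. by move=> r0 rk; rewrite /Fork (negbTE (AneB r0 rk)) eqxx. Qed.

Lemma Fork_ns {k r} (x : bits k) : x != forkA k r -> x != forkB k r -> Fork r x = ones x.
Proof. by move=> /negbTE hA /negbTE hB; rewrite /Fork hA hB. Qed.

Lemma Fork_ge_ones {k r} (x : bits k) : (ones x <= Fork r x)%N.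
Proof.
rewrite /Fork; case: ifP => _; first by have := ones_le x; lia.
by case: ifP => _ //; have := ones_le x; lia.
Qed.

Lemma Fnext_A {k r} (z : bits k) : (0 < r)%N -> (2 * r <= k)%N ->
  Fnext r (forkA k r) z = if z == forkB k r then forkB k r else forkA k r.
Proof.
move=> r0 rk; rewrite /Fnext Fork_A //.
case: eqP => [->|/eqP zB]; first by rewrite Fork_B; have -> : (k + 1 <= k + 2)%N by lia.
case: (z =P forkA k r) => [->|/eqP zA]; first by rewrite Fork_A // leqnn.
rewrite Fork_ns //; have := ones_le z => h.
by have -> : (k + 1 <= ones z)%N = false by lia.
Qed.

Lemma Fnext_ns_sp {k r} (x z : bits k) : (0 < r)%N -> (2 * r <= k)%N ->
  x != forkA k r -> x != forkB k r ->
  (z == forkA k r) || (z == forkB k r) -> Fnext r x z = z.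
Proof.
move=> r0 rk xA xB /orP[]/eqP ->; rewrite /Fnext Fork_ns // ?Fork_A ?Fork_B //;
by have := ones_le x => h; case: leqP => //; lia.
Qed.

Definition pib {k} (x : bits k) : bits k := [ffun i => x (rev_ord i)].

Lemma pibK {k} : involutive (@pib k).
Proof. by move=> x; apply/ffunP => i; rewrite !ffunE rev_ordK. Qed.

Lemma pib_inj {k} : injective (@pib k).
Proof. exact: inv_inj (@pibK k). Qed.

Lemma pib_A k r : pib (forkA k r) = forkB k r.
Proof.
apply/ffunP => i; rewrite !ffunE /=; have := ltn_ord i => h.
by apply/idP/idP; lia.
Qed.

Lemma pib_B k r : pib (forkB k r) = forkA k r.
Proof. by rewrite -(pib_A k r) pibK. Qed.

Lemma ones_pib k (x : bits k) : ones (pib x) = ones x.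
Proof.
rewrite /ones -[RHS](card_preimset _ (@rev_ord_inj k)); apply: eq_card => i.
by rewrite !inE ffunE.
Qed.

Lemma mutp_pib (R : realType) n k (x z : bits k) :
  mutp R n (pib x) (pib z) = mutp R n x z.
Proof.
rewrite /mutp [RHS](reindex_inj (@rev_ord_inj k)) /=.
by apply: eq_bigr => i _; rewrite !ffunE.
Qed.

Lemma ns_pib {k r} {x : bits k} : x != forkA k r -> x != forkB k r ->
  (pib x != forkA k r) && (pib x != forkB k r).
Proof.
move=> hA hB; apply/andP; split; apply/eqP => h.
  by move/eqP: hB; apply; rewrite -(pibK x) h pib_A.
by move/eqP: hA; apply; rewrite -(pibK x) h pib_B.
Qed.

Lemma Fnext_pib {k r} (x z : bits k) : (0 < r)%N -> (2 * r <= k)%N ->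
  x != forkA k r -> x != forkB k r ->
  Fnext r (pib x) (pib z) = pib (Fnext r x z).
Proof.
move=> r0 rk xA xB; have /andP[pxA pxB] := ns_pib xA xB.
case: (boolP ((z == forkA k r) || (z == forkB k r))) => hz.
  rewrite !Fnext_ns_sp //; case/orP: hz => /eqP ->;
  by rewrite ?pib_A ?pib_B eqxx ?orbT.
move: hz; rewrite negb_or => /andP[zA zB].
have /andP[pzA pzB] := ns_pib zA zB.
by rewrite /Fnext !Fork_ns // !ones_pib; case: ifP.
Qed.

Lemma trans_pib (R : realType) n k r (x y : bits k) : (0 < r)%N -> (2 * r <= k)%N ->
  x != forkA k r -> x != forkB k r ->
  trans R n r (pib x) (pib y) = trans R n r x y.
Proof.
move=> r0 rk xA xB; rewrite /trans (reindex_inj (@pib_inj k)) /=.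
apply: eq_bigr => z _; rewrite mutp_pib.
have := Fnext_pib x z r0 rk xA xB; rewrite /Fnext => ->.
by rewrite (inj_eq (@pib_inj k)).
Qed.

Lemma transA_ns (R : realType) n k r (y : bits k) : (0 < r)%N -> (2 * r <= k)%N ->
  y != forkA k r -> y != forkB k r -> trans R n r (forkA k r) y = 0.
Proof.
move=> r0 rk yA yB; rewrite /trans big1 // => z _.
have := Fnext_A z r0 rk; rewrite /Fnext => ->.
by case: (z == forkB k r); rewrite eq_sym ?(negbTE yA) ?(negbTE yB) mulr0.
Qed.

Lemma surv_pib (R : realType) n k r t (y : bits k) : (0 < r)%N -> (2 * r <= k)%N ->
  y != forkA k r -> y != forkB k r ->
  surv R n r t (pib y) = surv R n r t y.
Proof.
move=> r0 rk; elim: t y => [|t IH] y yA yB; have /andP[pyA pyB] := ns_pib yA yB.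
  by rewrite /= (negbTE pyB) (negbTE yB).
rewrite /= (negbTE pyB) (negbTE yB) (reindex_inj (@pib_inj k)) /=.
apply: eq_bigr => x _.
case: (boolP ((x == forkA k r) || (x == forkB k r))) => hx.
  case/orP: hx => /eqP ->.
    by rewrite pib_A surv_B mul0r (transA_ns _ _ _ _ _ r0 rk yA yB) mulr0.
  by rewrite pib_B surv_B mul0r (transA_ns _ _ _ _ _ r0 rk pyA pyB) mulr0.
move: hx; rewrite negb_or => /andP[xA xB].
by rewrite IH // trans_pib.
Qed.

Definition ns {k} r (x : bits k) := (x != forkA k r) && (x != forkB k r).

Lemma decomp (R : realType) n k r t (f : bits k -> R) : (0 < r)%N -> (2 * r <= k)%N ->
  \sum_x surv R n r t x * f x =
  surv R n r t (forkA k r) * f (forkA k r) + \sum_(x | ns r x) surv R n r t x * f x.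
Proof.
move=> r0 rk; rewrite (bigD1 (forkA k r)) //=; congr (_ + _).
rewrite (bigD1 (forkB k r)) /=; last by rewrite eq_sym AneB.
by rewrite surv_B mul0r add0r; apply: eq_bigl => x; rewrite /ns.
Qed.

Lemma transA_y (R : realType) n k r (y : bits k) : (0 < r)%N -> (2 * r <= k)%N ->
  trans R n r (forkA k r) y =
  \sum_z mutp R n (forkA k r) z *
     (if (if z == forkB k r then forkB k r else forkA k r) == y then 1 else 0).
Proof.
move=> r0 rk; apply: eq_bigr => z _.
by have := Fnext_A z r0 rk; rewrite /Fnext => ->.
Qed.

Lemma transAB (R : realType) n k r : (0 < r)%N -> (2 * r <= k)%N ->
  trans R n r (forkA k r) (forkB k r) = mutp R n (forkA k r) (forkB k r).
Proof.
move=> r0 rk; rewrite transA_y // (bigD1 (forkB k r)) //= eqxx /= eqxx mulr1 big1 ?addr0 //.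
move=> z /negbTE ->; by rewrite (negbTE (AneB r0 rk)) mulr0.
Qed.

Lemma transAA (R : realType) n k r : (0 < r)%N -> (2 * r <= k)%N ->
  trans R n r (forkA k r) (forkA k r) = 1 - mutp R n (forkA k r) (forkB k r).
Proof.
move=> r0 rk; rewrite transA_y // (bigD1 (forkB k r)) //= eqxx.
rewrite eq_sym (negbTE (AneB r0 rk)) mulr0 add0r.
rewrite (eq_bigr (fun z => mutp R n (forkA k r) z)); last first.
  by move=> z /negbTE ->; rewrite /= eqxx mulr1.
have := mutp_sum1 R n k (forkA k r); rewrite (bigD1 (forkB k r)) //= => <-.
by rewrite [RHS]addrC addKr.
Qed.

Definition Jt (R : realType) n k r t :=
  \sum_(x | ns r x) surv R n r t x * trans R n r x (forkA k r).

Lemma J_sym (R : realType) n k r t : (0 < r)%N -> (2 * r <= k)%N ->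
  \sum_(x | ns r x) surv R n r t x * trans R n r x (forkB k r) = Jt R n k r t.
Proof.
move=> r0 rk; rewrite (reindex_inj (@pib_inj k)) /=.
apply: eq_big => x.
  apply/idP/idP => /andP[h1 h2].
    have := ns_pib h1 h2; rewrite pibK; exact.
  exact: ns_pib h1 h2.
move=> /andP[h1 h2]; have /andP[h3 h4] := ns_pib h1 h2; rewrite pibK in h3 h4.
by rewrite -pib_A trans_pib // surv_pib.
Qed.

Lemma survA_step (R : realType) n k r t : (0 < r)%N -> (2 * r <= k)%N ->
  surv R n r t.+1 (forkA k r) =
  (1 - mutp R n (forkA k r) (forkB k r)) * surv R n r t (forkA k r) + Jt R n k r t.
Proof.
move=> r0 rk; rewrite /= (negbTE (AneB r0 rk)) decomp // transAA //.
by rewrite mulrC.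
Qed.

Lemma tail_step (R : realType) n k r t : (0 < r)%N -> (2 * r <= k)%N ->
  tailT R n k r t.+1 = tailT R n k r t
     - mutp R n (forkA k r) (forkB k r) * surv R n r t (forkA k r) - Jt R n k r t.
Proof.
move=> r0 rk.
have e1 : tailT R n k r t.+1 = \sum_(y : bits k) (\sum_(x : bits k) surv R n r t x * trans R n r x y)
     - \sum_x surv R n r t x * trans R n r x (forkB k r).
  rewrite /tailT [LHS](bigD1 (forkB k r)) //= [X in X - _](bigD1 (forkB k r)) //=.
  rewrite eqxx add0r [X in X - _]addrC addrK; apply: eq_bigr => y /negbTE /= ->; done.
have e2 : \sum_(y : bits k) (\sum_(x : bits k) surv R n r t x * trans R n r x y) = tailT R n k r t.
  rewrite exchange_big /tailT; apply: eq_bigr => x _.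
  by rewrite -big_distrr /= trans_row mulr1.
rewrite e1 e2 decomp // J_sym // transAB //.
by rewrite opprD addrA mulrC.
Qed.

Lemma tail0 (R : realType) n k r : (0 < r)%N -> (2 * r <= k)%N ->
  surv R n r 0 (forkA k r) + tailT R n k r 0 = 1.
Proof.
move=> r0 rk; rewrite /tailT (bigD1 (forkB k r)) //= eqxx add0r.
rewrite (negbTE (AneB r0 rk)).
have : \sum_(y : bits k) ((2:R) ^+ k)^-1 = 1.
  have h : forall x : R, x *+ (2 ^ k)%N = x * ((2:R) ^+ k).
    by move=> x; rewrite -natrX mulr_natr.
  by rewrite sumr_const card_ffun card_bool card_ord h mulVf.
move=> hs; rewrite -[RHS]hs [RHS](bigD1 (forkB k r)) //=; congr (_ + _).
by apply: eq_bigr => y /negbTE ->.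
Qed.

Definition SA (R : realType) n k r M := \sum_(0 <= t < M) surv R n r t (forkA k r).

Lemma invariant (R : realType) n k r M : (0 < r)%N -> (2 * r <= k)%N ->
  2 * mutp R n (forkA k r) (forkB k r) * SA R n k r M
  + surv R n r M (forkA k r) + tailT R n k r M = 1.
Proof.
move=> r0 rk; elim: M => [|M IH].
  by rewrite /SA big_geq // mulr0 add0r tail0.
have -> : SA R n k r M.+1 = SA R n k r M + surv R n r M (forkA k r).
  by rewrite /SA big_nat_recr.
rewrite survA_step // tail_step //.
rewrite -[RHS]IH; ring.
Qed.

Lemma tail_mono (R : realType) n k r t : (1 <= n)%N -> (0 < r)%N -> (2 * r <= k)%N ->
  tailT R n k r t.+1 <= tailT R n k r t.
Proof.
move=> n1 r0 rk; rewrite tail_step // -addrA gerDl -opprD oppr_le0.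
apply: addr_ge0; first by apply: mulr_ge0; [exact: mutp_ge0|exact: surv_ge0].
apply: sumr_ge0 => x _; apply: mulr_ge0; [exact: surv_ge0|exact: trans_ge0].
Qed.

Lemma tail_ge_A (R : realType) n k r t : (1 <= n)%N ->
  surv R n r t (forkA k r) <= tailT R n k r t.
Proof.
move=> n1; rewrite /tailT (bigD1 (forkA k r)) //= lerDl.
by apply: sumr_ge0 => x _; exact: surv_ge0.
Qed.

Lemma mutp_AB (R : realType) n k r : (0 < r)%N -> (2 * r <= k)%N ->
  mutp R n (forkA k r) (forkB k r) =
  n%:R^-1 ^+ r * ((1 - n%:R^-1) ^+ (k - r - r) * n%:R^-1 ^+ r).
Proof.
move=> r0 rk; rewrite /mutp.
set q : R := n%:R^-1.
pose G j := if (r <= j)%N == (j < k - r)%N then 1 - q else q.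
rewrite (eq_bigr (fun i : 'I_k => G i)); last by move=> i _; rewrite !ffunE.
rewrite -(big_mkord xpredT G) (@big_cat_nat _ _ _ r) //=; last by lia.
rewrite (@big_cat_nat _ _ _ (k - r) r k) //=; try lia.
congr (_ * (_ * _)).
- rewrite (eq_big_nat _ _ (F2 := fun=> q)) ?prodr_const_nat ?subn0 // => i /andP[_ hi].
  rewrite /G; have -> : (r <= i)%N = false by lia.
  by have -> : (i < k - r)%N = true by lia.
- rewrite (eq_big_nat _ _ (F2 := fun=> 1 - q)) ?prodr_const_nat // => i /andP[h1 h2].
  rewrite /G; have -> : (r <= i)%N = true by lia.
  by have -> : (i < k - r)%N = true by lia.
- rewrite (eq_big_nat _ _ (F2 := fun=> q)) ?prodr_const_nat; first by congr (_ ^+ _); lia.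
  move=> i /andP[h1 h2].
  rewrite /G; have -> : (r <= i)%N = true by lia.
  by have -> : (i < k - r)%N = false by lia.
Qed.

Lemma mutp_TB (R : realType) n k r (x : bits k) : (r <= k)%N -> (forall i, x i) ->
  mutp R n x (forkB k r) = (1 - n%:R^-1) ^+ (k - r) * n%:R^-1 ^+ r.
Proof.
move=> rk hx; rewrite /mutp.
set q : R := n%:R^-1.
pose G j := if true == (j < k - r)%N then 1 - q else q.
rewrite (eq_bigr (fun i : 'I_k => G i)); last by move=> i _; rewrite !ffunE hx.
rewrite -(big_mkord xpredT G) (@big_cat_nat _ _ _ (k - r)) //=; last by lia.
congr (_ * _).
- rewrite (eq_big_nat _ _ (F2 := fun=> 1 - q)) ?prodr_const_nat ?subn0 // => i /andP[_ hi].
  by rewrite /G hi.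
- rewrite (eq_big_nat _ _ (F2 := fun=> q)) ?prodr_const_nat; first by congr (_ ^+ _); lia.
  move=> i /andP[h1 h2].
  by rewrite /G; have -> : (i < k - r)%N = false by lia.
Qed.

Definition flip1 {k} (x : bits k) (i : 'I_k) : bits k := [ffun j => (j == i) || x j].

Lemma mutp_flip (R : realType) n k (x : bits k) i : (2 <= n)%N -> ~~ x i ->
  n%:R^-1 * (1 - n%:R^-1) ^+ k <= mutp R n x (flip1 x i).
Proof.
move=> n2 xi; rewrite /mutp (bigD1 i) //= !ffunE eqxx (negbTE xi) /=.
have q0 : 0 < n%:R^-1 :> R by rewrite invr_gt0 ltr0n; lia.
have q1 : n%:R^-1 <= 1 :> R by rewrite invf_le1 ?ler1n ?ltr0n //; lia.
rewrite ler_pM2l //.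
rewrite (eq_bigr (fun=> 1 - n%:R^-1)); last first.
  by move=> j /negbTE ji; rewrite !ffunE ji /= eqxx.
rewrite prodr_const; apply: ler_wiXn2l; first by rewrite subr_ge0.
  by rewrite lerBlDr lerDl ltW.
by apply: leq_trans (max_card _) _; rewrite card_ord.
Qed.

Lemma ones_flip k (x : bits k) i : ~~ x i -> ones (flip1 x i) = (ones x).+1.
Proof.
move=> xi; rewrite /ones.
have -> : [set j | flip1 x i j] = i |: [set j | x j].
  by apply/setP => j; rewrite !inE ffunE.
by rewrite cardsU1 inE xi.
Qed.

Lemma ones_lt k (x : bits k) i : ~~ x i -> (ones x < k)%N.
Proof.
move=> xi; rewrite /ones.
have : [set j | x j] \subset [set~ i].
  by apply/fintype.subsetP => j; rewrite !inE; apply: contraTneq => ->.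
move/subset_leq_card; rewrite cardsC1 card_ord.
have : (0 < k)%N by case: k x i xi => [|k] x [].
by move=> k0 h; lia.
Qed.

Lemma drift_gen (R : realType) n k (x : bits k) (h : bits k -> R) G d z0 :
  (1 <= n)%N -> (forall z, h z <= G) -> h z0 <= G - d -> 1 <= mutp R n x z0 * d ->
  \sum_z mutp R n x z * h z <= G - 1.
Proof.
move=> n1 hG h0 hm; rewrite (bigD1 z0) //=.
apply: le_trans (_ : mutp R n x z0 * (G - d) +
   \sum_(z | z != z0) mutp R n x z * G <= _).
  apply: lerD; first by apply: ler_wpM2l => //; exact: mutp_ge0.
  by apply: ler_sum => z _; apply: ler_wpM2l => //; exact: mutp_ge0.
have := mutp_sum1 R n k x; rewrite (bigD1 z0) //= => hs.
rewrite -big_distrl /=.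
set m := mutp R n x z0 in hs hm *.
set S := \sum_(z | z != z0) mutp R n x z in hs *.
have -> : S = 1 - m by lra.
have -> : m * (G - d) + (1 - m) * G = G - m * d by ring.
by rewrite lerD2l lerN2.
Qed.

Definition wq (R : realType) n k : R := (1 - n%:R^-1) ^+ k.

Definition gpot (R : realType) n k r (x : bits k) : R :=
  if x == forkB k r then 0 else if x == forkA k r then n%:R ^+ (2 * r) / wq R n k
  else n%:R ^+ (2 * r) / wq R n k + n%:R ^+ r / wq R n k
       + (k - ones x)%:R * (n%:R / wq R n k).

Lemma wq_gt0 (R : realType) n k : (2 <= n)%N -> 0 < wq R n k.
Proof.
move=> n2; apply: exprn_gt0; rewrite subr_gt0 invf_lt1 ?ltr0n ?ltr1n //; lia.
Qed.

Lemma gpot_ge0 (R : realType) n k r (x : bits k) : (2 <= n)%N -> 0 <= gpot R n k r x.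
Proof.
move=> n2; have w0 := wq_gt0 R n k n2.
rewrite /gpot; case: ifP => // _; case: ifP => _.
  by apply: divr_ge0; [exact: exprn_ge0|exact: ltW].
apply: addr_ge0; first apply: addr_ge0; try apply: divr_ge0; try exact: ltW;
  try exact: exprn_ge0.
by apply: mulr_ge0 => //; apply: divr_ge0 => //; exact: ltW.
Qed.

Lemma gpot_mono (R : realType) n k r (x z : bits k) : (2 <= n)%N ->
  (0 < r)%N -> (2 * r <= k)%N -> x != forkA k r -> x != forkB k r ->
  gpot R n k r (Fnext r x z) <= gpot R n k r x.
Proof.
move=> n2 r0 rk xA xB; have w0 := wq_gt0 R n k n2.
rewrite /Fnext; case: ifP => hle //.
rewrite {2}/gpot (negbTE xA) (negbTE xB).
have c0 : 0 <= n%:R ^+ r / wq R n k by apply: divr_ge0 => //; exact: ltW.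
have c1 : 0 <= (k - ones x)%:R * (n%:R / wq R n k).
  by apply: mulr_ge0 => //; apply: divr_ge0 => //; exact: ltW.
rewrite /gpot; case: ifP => zB.
  by apply: addr_ge0; [apply: addr_ge0|] => //; apply: divr_ge0 => //; exact: ltW.
case: ifP => zA; first by rewrite -addrA lerDl addr_ge0.
rewrite lerD2l ler_wpM2r //; first by apply: divr_ge0 => //; exact: ltW.
rewrite ler_nat; move: hle; rewrite !Fork_ns ?zA ?zB //; lia.
Qed.

Lemma qn_pow (R : realType) n m : (1 <= n)%N -> (n%:R^-1) ^+ m * n%:R ^+ m = 1 :> R.
Proof. by move=> n1; rewrite -exprMn mulVf ?expr1n // pnatr_eq0; lia. Qed.

Lemma ratio_ge1 (R : realType) n k e : (2 <= n)%N -> (e <= k)%N ->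
  1 <= (1 - n%:R^-1) ^+ e / wq R n k.
Proof.
move=> n2 ek; rewrite ler_pdivlMr ?wq_gt0 // mul1r /wq.
have q0 : 0 < n%:R^-1 :> R by rewrite invr_gt0 ltr0n; lia.
apply: ler_wiXn2l => //; rewrite subr_ge0 invf_le1 ?ler1n ?ltr0n //; lia.
Qed.

Lemma gpot_drift (R : realType) n k r (x : bits k) : (2 <= n)%N ->
  (0 < r)%N -> (2 * r <= k)%N -> x != forkB k r ->
  \sum_z mutp R n x z * gpot R n k r (Fnext r x z) <= gpot R n k r x - 1.
Proof.
move=> n2 r0 rk xB; have w0 := wq_gt0 R n k n2.
have n1 : (1 <= n)%N by lia.
set q : R := n%:R^-1.
case: (x =P forkA k r) => [->|/eqP xA].
  apply: (@drift_gen R n k _ _ _ (gpot R n k r (forkA k r)) (forkB k r)) => //.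
  - move=> z; rewrite Fnext_A //; case: ifP => _ //.
    by rewrite {1}/gpot eqxx; exact: gpot_ge0.
  - by rewrite Fnext_A // eqxx subrr /gpot eqxx.
  - rewrite mutp_AB // /gpot (negbTE (AneB r0 rk)) eqxx.
    have -> : (2 * r)%N = (r + r)%N by lia.
    rewrite exprD.
    have -> : q ^+ r * ((1 - q) ^+ (k - r - r) * q ^+ r) *
       (n%:R ^+ r * n%:R ^+ r / wq R n k) =
       (1 - q) ^+ (k - r - r) / wq R n k * ((q ^+ r * n%:R ^+ r) * (q ^+ r * n%:R ^+ r)).
      by rewrite /q; ring.
    rewrite qn_pow // mulr1 mulr1; apply: ratio_ge1 => //; lia.
case: (boolP [forall i, x i]) => [/forallP hx|].
  apply: (@drift_gen R n k _ _ _ (n%:R ^+ r / wq R n k) (forkB k r)) => //.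
  - by move=> z; apply: gpot_mono.
  - rewrite Fnext_ns_sp // ?eqxx ?orbT // {1}/gpot eqxx /gpot (negbTE xA) (negbTE xB).
    have -> : ones x = k.
      apply/eqP; rewrite eqn_leq ones_le /= /ones.
      have -> : [set i | x i] = [set: 'I_k] by apply/setP => i; rewrite !inE hx.
      by rewrite cardsT card_ord.
    rewrite subnn mul0r addr0 addrK; apply: divr_ge0; [exact: exprn_ge0|exact: ltW].
  - rewrite mutp_TB //; last by lia.
    have -> : (1 - q) ^+ (k - r) * q ^+ r * (n%:R ^+ r / wq R n k) =
       (1 - q) ^+ (k - r) / wq R n k * (q ^+ r * n%:R ^+ r).
      by rewrite /q; ring.
    rewrite qn_pow // mulr1; apply: ratio_ge1 => //; lia.
move=> /forallPn [i /= xi].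
have hlt := ones_lt _ _ _ xi.
apply: (@drift_gen R n k _ _ _ (n%:R / wq R n k) (flip1 x i)) => //.
- by move=> z; apply: gpot_mono.
- have -> : Fnext r x (flip1 x i) = flip1 x i.
    rewrite /Fnext Fork_ns //.
    have := @Fork_ge_ones k r (flip1 x i); rewrite ones_flip // => h.
    by have -> : (ones x <= Fork r (flip1 x i))%N by lia.
  rewrite /gpot (negbTE xA) (negbTE xB).
  have a0 : 0 <= n%:R / wq R n k by apply: divr_ge0 => //; exact: ltW.
  have b0 : 0 <= n%:R ^+ r / wq R n k by apply: divr_ge0 => //; exact: ltW.
  have c0 : 0 <= n%:R ^+ (2 * r) / wq R n k by apply: divr_ge0 => //; exact: ltW.
  have e : (k - ones x)%:R = (k - (ones x).+1)%:R + 1 :> R.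
    have -> : (k - ones x = (k - (ones x).+1).+1)%N by lia.
    by rewrite natr1.

  rewrite e mulrDl mul1r addrA addrK.
  case: ifP => _.
    by apply: addr_ge0; [apply: addr_ge0|apply: mulr_ge0].
  case: ifP => _; last by rewrite ones_flip.
  by rewrite -addrA lerDl; apply: addr_ge0 => //; apply: mulr_ge0.
- apply: le_trans (_ : q * wq R n k * (n%:R / wq R n k) <= _).
    rewrite mulrA -(mulrA q) (mulrC (wq R n k)) mulrA -mulrA mulfV ?gt_eqF //.
    by rewrite mulr1 /q mulVf // pnatr_eq0; lia.
  apply: ler_wpM2r; first by apply: divr_ge0 => //; exact: ltW.
  exact: mutp_flip.
Qed.

Definition Phi (R : realType) n k r t :=
  \sum_(y : bits k) surv R n r t y * gpot R n k r y.

Lemma tail_ge0 (R : realType) n k r t : (1 <= n)%N -> 0 <= tailT R n k r t.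
Proof. by move=> n1; apply: sumr_ge0 => y _; exact: surv_ge0. Qed.

Lemma Phi_step (R : realType) n k r t : (2 <= n)%N -> (0 < r)%N -> (2 * r <= k)%N ->
  Phi R n k r t.+1 + tailT R n k r t <= Phi R n k r t.
Proof.
move=> n2 r0 rk; have n1 : (1 <= n)%N by lia.
have e : Phi R n k r t.+1 = \sum_(x : bits k) surv R n r t x *
    (\sum_(y : bits k) trans R n r x y * gpot R n k r y).
  rewrite /Phi.
  rewrite (eq_bigr (fun y => (\sum_(x : bits k) surv R n r t x * trans R n r x y)
                             * gpot R n k r y)); last first.
    move=> y _ /=; case: ifP => [/eqP ->|//].
    by rewrite /gpot eqxx !mulr0.
  under eq_bigr do rewrite big_distrl /=.
  rewrite exchange_big /=; apply: eq_bigr => x _.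
  by rewrite big_distrr /=; apply: eq_bigr => y _; rewrite mulrA.
rewrite e -lerBrDr /Phi /tailT -sumrB; apply: ler_sum => x _.
case: (x =P forkB k r) => [->|/eqP xB]; first by rewrite surv_B !mul0r subr0.
rewrite -[X in _ * _ - X]mulr1 -mulrBr; apply: ler_wpM2l; first exact: surv_ge0.
rewrite trans_sum; exact: gpot_drift.
Qed.

Lemma Phi_sum (R : realType) n k r M : (2 <= n)%N -> (0 < r)%N -> (2 * r <= k)%N ->
  \sum_(0 <= t < M) tailT R n k r t + Phi R n k r M <= Phi R n k r 0.
Proof.
move=> n2 r0 rk; elim: M => [|M IH]; first by rewrite big_geq // add0r.
rewrite big_nat_recr //=; apply: le_trans IH.
have := Phi_step R n k r M n2 r0 rk; lra.
Qed.

Definition Gmax (R : realType) n k r : R :=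
  n%:R ^+ (2 * r) / wq R n k + n%:R ^+ r / wq R n k + k%:R * (n%:R / wq R n k).

Lemma gpot_le (R : realType) n k r (x : bits k) : (2 <= n)%N ->
  gpot R n k r x <= Gmax R n k r.
Proof.
move=> n2; have w0 := wq_gt0 R n k n2.
have a0 : 0 <= n%:R / wq R n k by apply: divr_ge0 => //; exact: ltW.
have b0 : 0 <= n%:R ^+ r / wq R n k by apply: divr_ge0 => //; exact: ltW.
have c0 : 0 <= n%:R ^+ (2 * r) / wq R n k by apply: divr_ge0 => //; exact: ltW.
rewrite /gpot /Gmax; case: ifP => _.
  by apply: addr_ge0; [apply: addr_ge0|apply: mulr_ge0].
case: ifP => _.
  by rewrite -addrA lerDl; apply: addr_ge0 => //; apply: mulr_ge0.
rewrite lerD2l ler_wpM2r // ler_nat; lia.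
Qed.

Lemma Phi_ge0 (R : realType) n k r t : (2 <= n)%N -> 0 <= Phi R n k r t.
Proof.
move=> n2; apply: sumr_ge0 => y _; apply: mulr_ge0.
  by apply: surv_ge0; lia.
exact: gpot_ge0.
Qed.

Lemma Phi0_le (R : realType) n k r : (2 <= n)%N -> (0 < r)%N -> (2 * r <= k)%N ->
  Phi R n k r 0 <= Gmax R n k r.
Proof.
move=> n2 r0 rk; have n1 : (1 <= n)%N by lia.
apply: le_trans (_ : tailT R n k r 0 * Gmax R n k r <= _).
  rewrite /Phi /tailT big_distrl /=; apply: ler_sum => y _.
  by apply: ler_wpM2l; [exact: (@surv_ge0 R n k r 0 y n1)|exact: gpot_le].
have g0 := le_trans (gpot_ge0 R n k r (forkB k r) n2) (gpot_le R n k r (forkB k r) n2).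
rewrite ler_piMl //; have := tail0 R n k r r0 rk; have := @surv_ge0 R n k r 0 (forkA k r) n1.
lra.
Qed.

Lemma w_bound (R : realType) n k : (2 <= n)%N -> (k <= n)%N ->
  1 <= wq R n k * expR 2.
Proof.
move=> n2 kn; set q : R := n%:R^-1.
have q0 : 0 < q by rewrite invr_gt0 ltr0n; lia.
have q2 : q <= 2^-1.
  rewrite /q lef_pV2 ?posrE ?ltr0n //; last by lia.
  by rewrite ler_nat.
apply: le_trans (_ : (1 - q) ^+ n * expR 2 <= _); last first.
  apply: ler_wpM2r; first exact: ltW (expR_gt0 _).
  rewrite /wq; apply: ler_wiXn2l => //; rewrite -/q; lra.
have -> : (2 : R) = (2 * q) * n%:R by rewrite -mulrA mulVf ?mulr1 // pnatr_eq0; lia.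
rewrite expRM_natr -exprMn; apply: exprn_ege1.
apply: le_trans (_ : (1 - q) * (1 + 2 * q) <= _).
  nra.
by apply: ler_wpM2l; [lra|exact: expR_ge1Dx].
Qed.

Lemma Gmax_le (R : realType) n k r : (2 <= n)%N -> (0 < r)%N -> (k <= n)%N ->
  Gmax R n k r <= 3 * expR 2 * n%:R ^+ (2 * r).
Proof.
move=> n2 r0 kn; have w0 := wq_gt0 R n k n2.
have N1 : (n ^ r <= n ^ (2 * r))%N by apply: leq_pexp2l; lia.
have N2 : (k * n <= n ^ (2 * r))%N.
  apply: leq_trans (_ : n ^ 2 <= _)%N; last by apply: leq_pexp2l; lia.
  by rewrite expnS expn1 leq_mul2r kn orbT.
have R1 : n%:R ^+ r <= n%:R ^+ (2 * r) :> R by rewrite -!natrX ler_nat.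
have R2 : k%:R * n%:R <= n%:R ^+ (2 * r) :> R by rewrite -natrM -natrX ler_nat.
have -> : Gmax R n k r = (n%:R ^+ (2 * r) + n%:R ^+ r + k%:R * n%:R) * (wq R n k)^-1.
  by rewrite /Gmax; field; rewrite gt_eqF.
have hw : (wq R n k)^-1 <= expR 2.
  apply: le_trans (_ : (wq R n k)^-1 * (wq R n k * expR 2) <= _).
    rewrite -[X in X <= _]mulr1; apply: ler_wpM2l; last exact: w_bound.
    by rewrite invr_ge0 ltW.
  by rewrite mulrA mulVf ?mul1r // gt_eqF.
have p0 : 0 <= n%:R ^+ (2 * r) :> R by apply: exprn_ge0.
have i0 : 0 <= (wq R n k)^-1 by rewrite invr_ge0 ltW.
apply: le_trans (_ : (3 * n%:R ^+ (2 * r)) * (wq R n k)^-1 <= _).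
  by apply: ler_wpM2r => //; lra.
have h := ler_wpM2l p0 hw; lra.
Qed.

Lemma tail_anti (R : realType) n k r t M : (1 <= n)%N -> (0 < r)%N -> (2 * r <= k)%N ->
  (t <= M)%N -> tailT R n k r M <= tailT R n k r t.
Proof.
move=> n1 r0 rk; elim: M => [|M IH].
  by rewrite leqn0 => /eqP ->.
rewrite leq_eqVlt => /orP[/eqP -> //|]; rewrite ltnS => /IH h.
by apply: le_trans h; apply: tail_mono.
Qed.

Lemma pAB_le (R : realType) n k r : (2 <= n)%N -> (0 < r)%N -> (2 * r <= k)%N ->
  mutp R n (forkA k r) (forkB k r) <= n%:R^-1 ^+ (2 * r).
Proof.
move=> n2 r0 rk; rewrite mutp_AB //.
have q0 : 0 < n%:R^-1 :> R by rewrite invr_gt0 ltr0n; lia.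
have q1 : n%:R^-1 <= 1 :> R by rewrite invf_le1 ?ler1n ?ltr0n //; lia.
have e1 : (1 - n%:R^-1) ^+ (k - r - r) <= 1 :> R.
  by apply: exprn_ile1; lra.
have e0 : 0 <= (1 - n%:R^-1) ^+ (k - r - r) :> R by apply: exprn_ge0; lra.
have -> : (2 * r)%N = (r + r)%N by lia.
rewrite exprD; apply: ler_wpM2l; first exact: exprn_ge0 (ltW q0).
rewrite -[X in _ <= X]mul1r; apply: ler_wpM2r => //; exact: exprn_ge0 (ltW q0).
Qed.

Lemma lower (R : realType) n k r : (2 <= n)%N -> (0 < r)%N -> (2 * r <= k)%N ->
  n%:R ^+ (2 * r) / 4 <= \sum_(0 <= t < n ^ (2 * r)) tailT R n k r t.
Proof.
move=> n2 r0 rk; have n1 : (1 <= n)%N by lia.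
set L := (n ^ (2 * r))%N.
have hL : n%:R ^+ (2 * r) = L%:R :> R by rewrite natrX.
case: (leP (tailT R n k r L) (4^-1)) => hT.
  have inv := invariant R n k r L r0 rk.
  have aL := tail_ge_A R n k r L n1.
  have pq := pAB_le R n k r n2 r0 rk.
  have S0 : 0 <= SA R n k r L.
    by apply: sumr_ge0 => t _; exact: surv_ge0.
  have QN := qn_pow R n (2 * r) n1.
  have N0 : 0 <= n%:R ^+ (2 * r) :> R by apply: exprn_ge0.
  have SS : SA R n k r L <= \sum_(0 <= t < L) tailT R n k r t.
    by apply: ler_sum => t _; exact: tail_ge_A.
  apply: le_trans SS.
  set p := mutp R n (forkA k r) (forkB k r) in inv pq.
  set S := SA R n k r L in inv S0 *.
  set Q := n%:R^-1 ^+ (2 * r) in pq QN.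
  set N := n%:R ^+ (2 * r) in QN N0 *.
  have h1 : 1 / 2 <= 2 * p * S by lra.
  have h2 : 2 * p * S <= 2 * Q * S by apply: ler_wpM2r => //; lra.
  have h3 : (1 / 2) * N <= 2 * Q * S * N by apply: ler_wpM2r => //; lra.
  have h4 : 2 * Q * S * N = 2 * S * (Q * N) by ring.
  rewrite QN mulr1 in h4; lra.
have hge : forall t, (t < L)%N -> 4^-1 <= tailT R n k r t.
  move=> t ht; apply: le_trans (ltW hT) _; apply: tail_anti => //; exact: ltnW.
apply: le_trans (_ : \sum_(0 <= t < L) (4^-1 : R) <= _).
  have e : forall x : R, x *+ L = x * L%:R by move=> x; rewrite mulr_natr.
  by rewrite sumr_const_nat subn0 e -hL mulrC.
by apply: ler_sum_nat => t /andP[_ ht]; apply: hge.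
Qed.

Lemma nnser_le (R : realType) (u : nat -> R) (B : R) :
  (forall n, 0 <= u n) -> (forall M, \sum_(0 <= t < M) u t <= B) ->
  (\sum_(0 <= t <oo) (u t)%:E <= B%:E)%E.
Proof.
move=> h0 hB.
apply: lime_le; first by apply: is_cvg_nneseries => n _ _; rewrite lee_fin.
apply: nearW => M /=.
by rewrite sumEFin lee_fin.
Qed.

Lemma nnser_ge (R : realType) (u : nat -> R) (B : R) M :
  (forall n, 0 <= u n) -> B <= \sum_(0 <= t < M) u t ->
  (B%:E <= \sum_(0 <= t <oo) (u t)%:E)%E.
Proof.
move=> h0 hB.
apply: le_trans (nneseries_lim_ge M _); last by move=> n _ _; rewrite lee_fin.
by rewrite sumEFin lee_fin.
Qed.

Theorem theorem2 (R : realType) (r : nat) (hr : (2 <= r)%N) :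
  exists (c C : R) (N : nat), 0 < c /\ 0 < C /\
    forall n k : nat, (N <= n)%N -> (2 * r <= k)%N -> (k <= n)%N ->
      ((c * n%:R ^+ (2 * r))%:E <= ET R n k r /\
       ET R n k r <= (C * n%:R ^+ (2 * r))%:E)%E.
Proof.
exists (4^-1), (3 * expR 2), 2%N; split; first by rewrite invr_gt0.
split; first by rewrite mulr_gt0 ?expR_gt0.
move=> n k n2 rk kn; have r0 : (0 < r)%N by lia.
have n1 : (1 <= n)%N by lia.
split.
  apply: (@nnser_ge R _ _ (n ^ (2 * r))%N); first by move=> t; exact: tail_ge0.
  by rewrite mulrC; exact: lower.
apply: nnser_le; first by move=> t; exact: tail_ge0.
move=> M; apply: le_trans (Gmax_le R n k r n2 r0 kn).
apply: le_trans (Phi0_le R n k r n2 r0 rk).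
have := Phi_sum R n k r M n2 r0 rk; have := Phi_ge0 R n k r M n2; lra.
Qed.
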